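(* Let $G$ be a bipartite graph with $v$ vertices in each of its two colour classes and with $e$ edges. If the girth of $G$ is at least $8$, then $$e<v^{4/3}+\frac{2}{3}v-\frac{2}{9}v^{2/3}-\frac{20}{81}v^{1/3}.$$ *)

(* Defs.v *)
From HB Require Import structures.
From mathcomp Require Import all_boot all_order all_algebra.
From mathcomp Require Import all_classical all_reals all_analysis.
Set Implicit Arguments. Unset Strict Implicit. Unset Printing Implicit Defensive.
Import Order.TTheory GRing.Theory Num.Theory.

(* A bipartite graph with colour classes 'I_v (left) and 'I_v (right) is given
   by its biadjacency relation E : left -> right -> bool.  The underlying
   simple graph has vertex set 'I_v + 'I_v. *)
Definition bip_adj (v : nat) (E : 'I_v -> 'I_v -> bool) (x y : 'I_v + 'I_v) : bool :=
  match x, y with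
  | inl i, inr j => E i j
  | inr j, inl i => E i j
  | _, _ => false
  end.

Definition bip_edges (v : nat) (E : 'I_v -> 'I_v -> bool) : nat :=
  #|[set p : 'I_v * 'I_v | E p.1 p.2]|.

Definition has_cycle_of_length (V : Type) (adj : V -> V -> bool) (n : nat) : Prop :=
  exists c : nat -> V,
    (forall i j, i < n -> j < n -> c i = c j -> i = j) /\
    (forall i, i < n -> adj (c i) (c (i.+1 %% n))).

Definition girth_ge (V : Type) (adj : V -> V -> bool) (g : nat) : Prop :=
  forall n, 3 <= n -> n < g -> ~ has_cycle_of_length adj n.

(* Main.v *)
Require Import Defs.
From HB Require Import structures.
From mathcomp Require Import all_boot all_order all_algebra.
From mathcomp Require Import all_classical all_reals all_analysis.
From mathcomp Require Import ring lra.
Import Order.TTheory GRing.Theory Num.Theory.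
Local Open Scope classical_set_scope.
Local Open Scope ring_scope.

Section LnIneq.
Variable R : realType.

Lemma ln_ge_1V (t : R) : 0 < t -> 1 - t^-1 <= ln t.
Proof.
move=> t0.
have h : -1 < t^-1 - 1 by rewrite ltrBrDr addrC subrr invr_gt0.
have := @le_ln1Dx R (t^-1 - 1) h.
rewrite addrC addrNK lnV ?posrE //; lra.
Qed.

Lemma ln_le_sub1 (t : R) : 0 < t -> ln t <= t - 1.
Proof.
move=> t0; have := @le_ln1Dx R (t - 1).
have -> : 1 + (t - 1) = t by ring.
apply; lra.
Qed.

Lemma L1 (t : R) : 1 <= t -> 2 * (t - 1) <= (t + 1) * ln t.
Proof.
move=> t1.
have dh : forall u : R, 0 < u -> is_derive u 1 ((id + cst 1) * (@ln R) - cst 2 * (id - cst 1))%R (ln u + (u + 1) / u - 2).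
  move=> u u0.
  have Hln := is_derive1_ln u0.
  have := is_deriveB (is_deriveM (is_deriveD (is_derive_id u (1:R)) (is_derive_cst (1:R) u 1)) Hln) (is_deriveM (is_derive_cst (2:R) u 1) (is_deriveB (is_derive_id u (1:R)) (is_derive_cst (1:R) u 1))).
  move/is_derive_eq; apply.
  rewrite /= /cst.
  have sE : forall a b : R, a *: b = a * b by [].
  rewrite !sE /=.
  have -> : (id + (fun=> 1)) u = u + 1 :> R by [].
  have -> : (id - (fun=> 1)) u = u - 1 :> R by [].
  by field; lra.
have t0 : 0 < t by lra.
have dh' : forall x, x \in `]1, t[ -> is_derive x 1 ((id + cst 1) * (@ln R) - cst 2 * (id - cst 1))%R (ln x + (x + 1) / x - 2).
  by move=> x; rewrite in_itv /= => /andP[x1 _]; apply: dh; lra.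
have [c] : exists2 c, c \in `[1, t] & ((id + cst 1) * (@ln R) - cst 2 * (id - cst 1))%R t - ((id + cst 1) * (@ln R) - cst 2 * (id - cst 1))%R 1 = (ln c + (c + 1) / c - 2) * (t - 1).
  apply: MVT_segment t1 dh' _.
  apply: derivable_within_continuous => x; rewrite in_itv /= => /andP[x1 _].
  have := dh x (lt_le_trans ltr01 x1).
  by case.
rewrite in_itv /= => /andP[c1 ct].
have E : forall u : R, ((id + cst 1) * (@ln R) - cst 2 * (id - cst 1))%R u = (u + 1) * ln u - 2 * (u - 1) by [].
rewrite !E.
rewrite ln1 mulr0 subrr mulr0 subr0.
have := @ln_ge_1V c (lt_le_trans ltr01 c1).
have -> : (c + 1) / c = 1 + c^-1 by field; lra.
move=> hc h.
have : 0 <= (ln c + (1 + c^-1) - 2) * (t - 1) by apply: mulr_ge0; lra.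
lra.
Qed.
Lemma L2 (t : R) : 0 < t -> t <= 1 -> t ^+ 2 - 1 <= 2 * t * ln t.
Proof.
move=> t0 t1.
have dh : forall u : R, 0 < u -> is_derive u 1 (cst 2 * id * (@ln R) - id * id + cst 1)%R (2 * ln u + 2 - 2 * u).
  move=> u u0.
  have Hln := is_derive1_ln u0.
  have := is_deriveD (is_deriveB (is_deriveM (is_deriveM (is_derive_cst (2:R) u 1) (is_derive_id u (1:R))) Hln) (is_deriveM (is_derive_id u (1:R)) (is_derive_id u (1:R)))) (is_derive_cst (1:R) u 1).
  move/is_derive_eq; apply.
  rewrite /= /cst.
  have sE : forall a b : R, a *: b = a * b by [].
  rewrite !sE /=.
  have -> : ((fun=> 2) * id) u = 2 * u :> R by [].
  by field; lra.
have dh' : forall x, x \in `]t, 1[ -> is_derive x 1 (cst 2 * id * (@ln R) - id * id + cst 1)%R (2 * ln x + 2 - 2 * x).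
  by move=> x; rewrite in_itv /= => /andP[x1 _]; apply: dh; lra.
have [c] : exists2 c, c \in `[t, 1] & (cst 2 * id * (@ln R) - id * id + cst 1)%R 1 - (cst 2 * id * (@ln R) - id * id + cst 1)%R t = (2 * ln c + 2 - 2 * c) * (1 - t).
  apply: MVT_segment t1 dh' _.
  apply: derivable_within_continuous => x; rewrite in_itv /= => /andP[x1 _].
  have := dh x (lt_le_trans t0 x1).
  by case.
rewrite in_itv /= => /andP[c1 ct].
have E : forall u : R, (cst 2 * id * (@ln R) - id * id + cst 1)%R u = 2 * u * ln u - u * u + 1 by [].
rewrite !E ln1 mulr0.
have := @ln_le_sub1 c (lt_le_trans t0 c1).
move=> hc h.
have : (2 * ln c + 2 - 2 * c) * (1 - t) <= 0 by apply: mulr_le0_ge0; lra.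
rewrite expr2; lra.
Qed.

Lemma tangent_core (c y : R) : 1 <= c -> 0 < y -> 1 <= c * y ->
  (1 + c) * (y - 1) <= (1 + c * y) * ln y.
Proof.
move=> c1 y0 cy1.
case: (lerP 1 y) => y1.
  have h := @L1 y y1.
  have l0 : 0 <= ln y by apply: ln_ge0.
  have h2 : (1 + c) * (y + 1) <= 2 * (1 + c * y) by nra.
  nra.
have h := @L2 y y0 (ltW y1).
have l0 : ln y <= 0 by apply: ln_le0; lra.
have h3 : 2 * y * ((1 + c) * (y - 1)) <= 2 * y * ((1 + c * y) * ln y).
  have : (1 + c * y) * (y ^+ 2 - 1) <= (1 + c * y) * (2 * y * ln y) by apply: ler_wpM2l; nra.
  rewrite expr2 => h4.
  have e1 : 2 * y * ((1 + c) * (y - 1)) = (1 + c * y) * (y * y - 1) - (y - 1) * (y - 1) * (c * y - 1) by ring.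
  have e2 : 2 * y * ((1 + c * y) * ln y) = (1 + c * y) * (2 * y * ln y) by ring.
  have P : 0 <= (y - 1) * (y - 1) * (c * y - 1) by apply: mulr_ge0; [nra | lra].
  rewrite e1 e2; lra.
have y2 : 0 < 2 * y by lra.
by rewrite -(ler_pM2l y2).
Qed.

Lemma tangent (d D : R) : 2 <= d -> 2 <= D ->
  d * ln (D - 1) + D * (d - D) / (D - 1) <= d * ln (d - 1).
Proof.
move=> d2 D2.
set c := D - 1.
have c1 : 1 <= c by rewrite /c; lra.
set y := (d - 1) / c.
have c0 : c != 0 by apply/eqP; lra.
have dE : d = 1 + c * y by rewrite /y mulrC divfK //; ring.
have DE : D = 1 + c by rewrite /c; ring.
have y0 : 0 < y by rewrite /y divr_gt0 //; lra.
have cy1 : 1 <= c * y by lra.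
have -> : d - 1 = c * y by lra.
rewrite lnM ?posrE //; last by lra.
have -> : D * (d - D) / c = (1 + c) * (y - 1).
  rewrite dE DE; field; done.
have := @tangent_core c y c1 y0 cy1.
rewrite -dE; lra.
Qed.

End LnIneq.

Local Open Scope nat_scope.

Section X. End X.

Definition dL {T1 T2 : finType} (E : T1 -> T2 -> bool) (B : {set T2}) (x : T1) : nat :=
  \sum_(y in B) E x y.
Definition dR {T1 T2 : finType} (E : T1 -> T2 -> bool) (A : {set T1}) (y : T2) : nat :=
  \sum_(x in A) E x y.
Definition eAB {T1 T2 : finType} (E : T1 -> T2 -> bool) (A : {set T1}) (B : {set T2}) : nat :=
  \sum_(x in A) dL E B x.
Definition trE {T1 T2 : finType} (E : T1 -> T2 -> bool) : T2 -> T1 -> bool := fun y x => E x y.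

Definition NC4 {T1 T2 : finType} (E : T1 -> T2 -> bool) : Prop :=
  forall x x' y y', x != x' -> y != y' -> E x y -> E x' y -> E x' y' -> E x y' -> False.
Definition NC6 {T1 T2 : finType} (E : T1 -> T2 -> bool) : Prop :=
  forall x1 x2 x3 y1 y2 y3, x1 != x2 -> x2 != x3 -> x1 != x3 ->
    y1 != y2 -> y2 != y3 -> y1 != y3 ->
    E x1 y1 -> E x2 y1 -> E x2 y2 -> E x3 y2 -> E x3 y3 -> E x1 y3 -> False.

Lemma NC4_tr {T1 T2 : finType} (E : T1 -> T2 -> bool) : NC4 E -> NC4 (trE E).
Proof.
move=> H y y' x x' nyy nxx e1 e2 e3 e4; rewrite /trE in e1 e2 e3 e4.
exact: (H x x' y y' nxx nyy e1 e4 e3 e2).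
Qed.

Lemma NC6_tr {T1 T2 : finType} (E : T1 -> T2 -> bool) : NC6 E -> NC6 (trE E).
Proof.
move=> H a1 a2 a3 b1 b2 b3 n12 n23 n13 m12 m23 m13 e1 e2 e3 e4 e5 e6.
rewrite /trE in e1 e2 e3 e4 e5 e6.
apply: (H b1 b2 b3 a2 a3 a1) => //; by rewrite eq_sym.
Qed.

Lemma eAB_tr {T1 T2 : finType} (E : T1 -> T2 -> bool) A B : eAB (trE E) B A = eAB E A B.
Proof. by rewrite /eAB /dL /trE exchange_big. Qed.

Lemma sum_le1 {I : finType} (P : pred I) (b : I -> bool) :
  (forall i j, P i -> P j -> b i -> b j -> i = j) -> \sum_(i | P i) (b i : nat) <= 1.
Proof.
move=> U.
case: (pickP [pred i | P i && b i]) => [i /andP[Pi bi] | none].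
  rewrite (bigD1 i) //= bi big1 // => j /andP[Pj nji].
  case bj: (b j) => //.
  by move: nji; rewrite (U j i Pj Pi bj bi) eqxx.
rewrite big1 // => j Pj; have := none j; rewrite /= Pj /=.
by case: (b j).
Qed.

Definition c3 {T1 T2 : finType} (E : T1 -> T2 -> bool) (x : T1) (y' : T2) (y : T2) (x' : T1) : bool :=
  [&& E x y, E x' y, E x' y', x != x' & y != y'].

Lemma N3_le1 {T1 T2 : finType} (E : T1 -> T2 -> bool) (A : {set T1}) (B : {set T2}) x y' :
  NC4 E -> NC6 E ->
  (E x y' : nat) + \sum_(y in B) \sum_(x' in A) (c3 E x y' y x' : nat) <= 1.
Proof.
move=> H4 H6.
case Exy: (E x y').
  rewrite big1 // => y _; rewrite big1 // => x' _.
  case c: (c3 E x y' y x') => //.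
  move: c => /and5P[e1 e2 e3 n1 n2].
  by case: (H4 x x' y y' n1 n2 e1 e2 e3 Exy).
rewrite add0n pair_big /=.
apply: sum_le1 => [[y1 x1] [y2 x2]] /= _ _ /and5P[a1 a2 a3 a4 a5] /and5P[b1 b2 b3 b4 b5].
case: (eqVneq y1 y2) => [ey | ny]; case: (eqVneq x1 x2) => [ex | nx].
- by rewrite ey ex.
- subst y2; case: (H4 x1 x2 y1 y' nx a5 a2 b2 b3 a3).
- subst x2; case: (H4 x x1 y1 y2 a4 ny a1 a2 b2 b1).
- case: (H6 x x1 x2 y1 y' y2 a4 nx b4 a5 _ ny a1 a2 a3 b3 b2 b1).
  by rewrite eq_sym.
Qed.

Lemma sum_minus1 {T : finType} (A : {set T}) (f : T -> bool) x' :
  x' \in A -> f x' -> \sum_(x in A) ((f x && (x != x')) : nat) = (\sum_(x in A) (f x : nat)).-1.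
Proof.
move=> xA fx.
rewrite (bigD1 x') //= (bigD1 x' (P := fun x => x \in A)) //= eqxx andbF fx add0n add1n /=.
by apply: eq_bigr => x /andP[_ ->]; rewrite andbT.
Qed.

Lemma inner3 {T1 T2 : finType} (E : T1 -> T2 -> bool) (A : {set T1}) (B : {set T2}) x' y :
  x' \in A -> y \in B ->
  \sum_(x in A) \sum_(y' in B) (c3 E x y' y x' : nat) = E x' y * ((dR E A y).-1 * (dL E B x').-1).
Proof.
move=> xA yB.
case Exy: (E x' y); last first.
  by rewrite mul0n big1 // => x _; rewrite big1 // => y' _; rewrite /c3 Exy /= andbF.
rewrite mul1n /dR /dL -(@sum_minus1 _ A (fun x => E x y) x') // -(@sum_minus1 _ B (E x') y) //.
rewrite big_distrl /=; apply: eq_bigr => x _.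
rewrite big_distrr /=; apply: eq_bigr => y' _.
rewrite /c3 Exy /=.
rewrite (eq_sym y y').
by case: (E x y); case: (x != x'); case: (E x' y'); case: (y' != y).
Qed.

Definition P3 {T1 T2 : finType} (E : T1 -> T2 -> bool) (A : {set T1}) (B : {set T2}) : nat :=
  \sum_(x' in A) \sum_(y in B) E x' y * ((dR E A y).-1 * (dL E B x').-1).

Lemma P3_bound {T1 T2 : finType} (E : T1 -> T2 -> bool) (A : {set T1}) (B : {set T2}) :
  NC4 E -> NC6 E -> P3 E A B + eAB E A B <= #|A| * #|B|.
Proof.
move=> H4 H6.
have H : \sum_(x in A) \sum_(y' in B) ((E x y' : nat) + \sum_(y in B) \sum_(x' in A) (c3 E x y' y x' : nat))
   <= \sum_(x in A) \sum_(y' in B) 1.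
  by apply: leq_sum => x _; apply: leq_sum => y' _; apply: N3_le1.
move: H; rewrite [X in _ <= X](eq_bigr (fun _ => #|B|)); last first.
  by move=> x _; rewrite sum_nat_const muln1.
rewrite sum_nat_const mulnC.
suff -> : \sum_(x in A) \sum_(y' in B) ((E x y' : nat) + \sum_(y in B) \sum_(x' in A) (c3 E x y' y x' : nat))
   = eAB E A B + P3 E A B by rewrite addnC.
under eq_bigr => x _ do rewrite big_split /=.
rewrite big_split /=; congr (_ + _).
under eq_bigr => x _ do rewrite exchange_big /=.
under eq_bigr => x _ do (under eq_bigr => y _ do rewrite exchange_big /=).
rewrite exchange_big /=.
under eq_bigr => y _ do rewrite exchange_big /=.
rewrite exchange_big /=.
rewrite /P3; apply: eq_bigr => x' xA; apply: eq_bigr => y yB.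
exact: inner3.
Qed.

Local Open Scope ring_scope.

Local Open Scope classical_set_scope.
Local Open Scope ring_scope.

Lemma jensen_side (R : realType) {I : finType} (A : {set I}) (d : I -> R) :
  (forall x, x \in A -> 2 <= d x) -> (0 < #|A|)%N ->
  (\sum_(x in A) d x) * ln ((\sum_(x in A) d x) / #|A|%:R - 1) <= \sum_(x in A) d x * ln (d x - 1).
Proof.
move=> d2 A0.
set e := \sum_(x in A) d x.
set D := e / #|A|%:R.
have m0 : 0 < #|A|%:R :> R by rewrite ltr0n.
have eD : e = #|A|%:R * D by rewrite /D mulrC divfK // gt_eqF.
have e2 : #|A|%:R * 2 <= e.
  by rewrite /e mulr_natl -sumr_const; apply: ler_sum => x xA; apply: d2.
have D2 : 2 <= D by rewrite /D ler_pdivlMr // mulrC.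
have : \sum_(x in A) (d x * ln (D - 1) + D * (d x - D) / (D - 1)) <= \sum_(x in A) d x * ln (d x - 1).
  by apply: ler_sum => x xA; apply: tangent => //; apply: d2.
rewrite big_split /= -mulr_suml -/e.
have -> : \sum_(x in A) D * (d x - D) / (D - 1) = 0.
  rewrite -mulr_suml -mulr_sumr sumrB -/e sumr_const eD.
  by rewrite -[D *+ _]mulr_natl subrr mulr0 mul0r.
by rewrite addr0.
Qed.

Lemma natr_pred (R : realType) (d : nat) : (1 <= d)%N -> (d.-1)%:R = d%:R - 1 :> R.
Proof. by case: d => // d _; rewrite /= -addn1 natrD addrK. Qed.

Lemma jensen_edges (R : realType) {T1 T2 : finType} (E : T1 -> T2 -> bool) (A : {set T1}) (B : {set T2}) :
  (forall x, x \in A -> (2 <= dL E B x)%N) -> (forall y, y \in B -> (2 <= dR E A y)%N) ->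
  (0 < #|A|)%N -> (0 < #|B|)%N ->
  (eAB E A B)%:R * ((eAB E A B)%:R - #|A|%:R) * ((eAB E A B)%:R - #|B|%:R)
    <= #|A|%:R * #|B|%:R * (P3 E A B)%:R :> R.
Proof.
move=> dA dB A0 B0.
set a := fun x => (dL E B x)%:R : R.
set b := fun y => (dR E A y)%:R : R.
set e := (eAB E A B)%:R : R.
set m := #|A|%:R : R.
set n := #|B|%:R : R.
have m0 : 0 < m by rewrite ltr0n.
have n0 : 0 < n by rewrite ltr0n.
have eA : e = \sum_(x in A) a x by rewrite /e /eAB natr_sum.
have eB : e = \sum_(y in B) b y by rewrite /e -eAB_tr /eAB natr_sum.
have a2 : forall x, x \in A -> 2 <= a x by move=> x xA; rewrite /a (ler_nat R 2) dA.
have b2 : forall y, y \in B -> 2 <= b y by move=> y yB; rewrite /b (ler_nat R 2) dB.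
have aE : forall x, a x = \sum_(y in B) (E x y)%:R by move=> x; rewrite /a /dL natr_sum.
have bE : forall y, b y = \sum_(x in A) (E x y)%:R by move=> y; rewrite /b /dR natr_sum.
have P3E : (P3 E A B)%:R = \sum_(x in A) \sum_(y in B) (E x y)%:R * ((a x - 1) * (b y - 1)) :> R.
  rewrite /P3 natr_sum; apply: eq_bigr => x xA; rewrite natr_sum; apply: eq_bigr => y yB.
  rewrite natrM natrM !natr_pred ?(leq_trans _ (dA x xA)) ?(leq_trans _ (dB y yB)) //.
  by rewrite /a /b [X in _ * X]mulrC.
have e0 : 0 < e.
  rewrite eA; apply: (@lt_le_trans _ _ (\sum_(x in A) (2 : R))).
    by rewrite sumr_const pmulrn_lgt0.
  by apply: ler_sum => x xA; apply: a2.
have em : 2 * m <= e.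
  by rewrite eA /m mulrC mulr_natl -sumr_const; apply: ler_sum => x xA; apply: a2.
have en : 2 * n <= e.
  by rewrite eB /n mulrC mulr_natl -sumr_const; apply: ler_sum => y yB; apply: b2.
pose z := fun x y => ln (a x - 1) + ln (b y - 1).
have zE : forall x y, x \in A -> y \in B -> expR (z x y) = (a x - 1) * (b y - 1).
  move=> x y xA yB; rewrite /z expRD !lnK // posrE subr_gt0.
    by apply: lt_le_trans (b2 y yB); rewrite ltr1n.
  by apply: lt_le_trans (a2 x xA); rewrite ltr1n.
pose S := \sum_(x in A) \sum_(y in B) (E x y)%:R * z x y.
pose mu := S / e.
have eE : e = \sum_(x in A) \sum_(y in B) (E x y)%:R :> R by rewrite eA; apply: eq_bigr => x _; apply: aE.
have C1 : e * expR mu <= (P3 E A B)%:R.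
  rewrite P3E.
  have : \sum_(x in A) \sum_(y in B) (E x y)%:R * (expR mu * (1 + z x y - mu)) <=
         \sum_(x in A) \sum_(y in B) (E x y)%:R * ((a x - 1) * (b y - 1)).
    apply: ler_sum => x xA; apply: ler_sum => y yB.
    apply: ler_wpM2l => //; rewrite -zE //.
    have -> : expR (z x y) = expR mu * expR (z x y - mu) by rewrite -expRD addrC subrK.
    apply: ler_wpM2l; first exact: ltW (expR_gt0 _).
    by rewrite -addrA; apply: expR_ge1Dx.
  suff -> : \sum_(x in A) \sum_(y in B) (E x y)%:R * (expR mu * (1 + z x y - mu)) = e * expR mu by [].
  have -> : \sum_(x in A) \sum_(y in B) (E x y)%:R * (expR mu * (1 + z x y - mu)) =
     expR mu * (\sum_(x in A) \sum_(y in B) ((E x y)%:R + (E x y)%:R * z x y - mu * (E x y)%:R)).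
    rewrite mulr_sumr; apply: eq_bigr => x _; rewrite mulr_sumr; apply: eq_bigr => y _.
    by ring.
  under eq_bigr => x _ do rewrite big_split /= big_split /= sumrN.
  rewrite big_split /= big_split /= sumrN -/S -eE.
  under eq_bigr => x _ do rewrite -mulr_sumr.
  rewrite -mulr_sumr -eE /mu divfK ?gt_eqF //.
  by rewrite addrK mulrC.
have SE : S = \sum_(x in A) a x * ln (a x - 1) + \sum_(y in B) b y * ln (b y - 1).
  rewrite /S /z.
  under eq_bigr => x _ do (under eq_bigr => y _ do rewrite mulrDr; rewrite big_split /=).
  rewrite big_split /=; congr (_ + _).
    by apply: eq_bigr => x _; rewrite -mulr_suml aE.
  rewrite exchange_big /=; apply: eq_bigr => y _; by rewrite -mulr_suml bE.
have JA := @jensen_side R _ A a a2 A0.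
have JB := @jensen_side R _ B b b2 B0.
rewrite -eA -/m in JA; rewrite -eB -/n in JB.
have em1 : 0 < e / m - 1 by rewrite subr_gt0 ltr_pdivlMr // mul1r; lra.
have en1 : 0 < e / n - 1 by rewrite subr_gt0 ltr_pdivlMr // mul1r; lra.
have C2 : ln (e / m - 1) + ln (e / n - 1) <= mu.
  rewrite /mu ler_pdivlMr // mulrC mulrDr SE; lra.
have C3 : (e / m - 1) * (e / n - 1) <= expR mu.
  by rewrite -(lnK em1) -(lnK en1) -expRD ler_expR.
have : e * ((e / m - 1) * (e / n - 1)) <= (P3 E A B)%:R.
  apply: le_trans C1; apply: ler_wpM2l => //; exact: ltW.
have -> : e * (e - m) * (e - n) = m * n * (e * ((e / m - 1) * (e / n - 1))).
  by field; rewrite ?gt_eqF.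
move=> H; apply: ler_wpM2l => //; apply: mulr_ge0; exact: ltW.
Qed.

Local Open Scope ring_scope.

Definition Gf {R : realType} (e m n : R) : R :=
  e * (e - m) * (e - n) + e * m * n - m ^+ 2 * n ^+ 2.

Lemma AR_triv (R : realType) (e m n : R) : 0 <= e -> 0 <= m -> 0 <= n -> e <= m * n ->
  (e = 0 \/ 1 <= e) -> (e <= m \/ e <= n) -> Gf e m n <= 0.
Proof.
rewrite /Gf => e0 m0 n0 emn e01 emn2.
case: (lerP n e) => ne; case: (lerP m e) => me.
-
  have h : (e - m) * (e - n) = 0.
    by case: emn2 => h; [have -> : e - m = 0 by lra | have -> : e - n = 0 by lra]; rewrite ?mul0r ?mulr0.
  have : e * m * n <= m ^+ 2 * n ^+ 2.
    have : e * (m * n) <= (m * n) * (m * n) by apply: ler_wpM2r => //; apply: mulr_ge0.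
    by rewrite !expr2; lra.
  by rewrite -[e * (e - m) * (e - n)]mulrA h mulr0 add0r; lra.
- have h : e * (e - m) * (e - n) <= 0.
    rewrite -[e * (e - m) * (e - n)]mulrA; apply: mulr_ge0_le0 => //; apply: mulr_le0_ge0; lra.
  have : e * (m * n) <= (m * n) * (m * n) by apply: ler_wpM2r => //; apply: mulr_ge0.
  rewrite !expr2; lra.
- have h : e * (e - m) * (e - n) <= 0.
    rewrite -[e * (e - m) * (e - n)]mulrA; apply: mulr_ge0_le0 => //; apply: mulr_ge0_le0; lra.
  have : e * (m * n) <= (m * n) * (m * n) by apply: ler_wpM2r => //; apply: mulr_ge0.
  rewrite !expr2; lra.
- case: e01 => [-> | e1].
    rewrite !mul0r !add0r; rewrite oppr_le0; apply: mulr_ge0; apply: exprn_ge0 => //.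
  have m1 : 1 <= m by lra.
  have n1 : 1 <= n by lra.
  have h1 : (m - e) * (n - e) <= (m - 1) * (n - 1) by apply: ler_pM; lra.
  set X := (m - 1) * (n - 1) + m * n.
  have X0 : 0 <= X by rewrite /X; apply: addr_ge0; apply: mulr_ge0; lra.
  have h2 : e * (e - m) * (e - n) + e * m * n <= e * X.
    have -> : e * (e - m) * (e - n) + e * m * n = e * ((m - e) * (n - e) + m * n) by ring.
    apply: ler_wpM2l => //; rewrite /X; lra.
  have h3 : e * X <= m * X by apply: ler_wpM2r => //; lra.
  have h4 : X <= m * n ^+ 2.
    have : 0 <= m * (n - 1) ^+ 2 by apply: mulr_ge0 => //; apply: sqr_ge0.
    rewrite /X; move=> h; have : 0 <= n - 1 by lra.
    move=> h'; nra.
  have h5 : m * X <= m * (m * n ^+ 2) by apply: ler_wpM2l.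
  have -> : m ^+ 2 * n ^+ 2 = m * (m * n ^+ 2) by ring.
  lra.
Qed.

Lemma AR_step0 (R : realType) (e m n : R) : 2 <= m -> n <= e -> 0 <= n ->
  Gf e (m - 1) n <= 0 -> Gf e m n <= 0.
Proof.
rewrite /Gf => m2 ne n0 H.
have id : (m - 1) * (e * (e - m) * (e - n) + e * m * n - m ^+ 2 * n ^+ 2) =
  m * (e * (e - (m - 1)) * (e - n) + e * (m - 1) * n - (m - 1) ^+ 2 * n ^+ 2)
  - (e ^+ 2 * (e - n) + m * (m - 1) * n ^+ 2) by ring.
have p1 : 0 <= e ^+ 2 * (e - n) + m * (m - 1) * n ^+ 2.
  apply: addr_ge0; apply: mulr_ge0; rewrite ?sqr_ge0 //; try lra.
  apply: mulr_ge0; lra.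
have p2 : m * (e * (e - (m - 1)) * (e - n) + e * (m - 1) * n - (m - 1) ^+ 2 * n ^+ 2) <= 0.
  apply: mulr_ge0_le0 => //; lra.
have : (m - 1) * (e * (e - m) * (e - n) + e * m * n - m ^+ 2 * n ^+ 2) <= 0 by rewrite id; lra.
rewrite pmulr_rle0 //; lra.
Qed.

Lemma AR_step1 (R : realType) (e m n : R) : 2 <= m -> 1 <= n -> m <= e -> n <= e ->
  (m + n <= e \/ e + 1 <= m + n) ->
  Gf (e - 1) (m - 1) n <= 0 -> Gf e m n <= 0.
Proof.
rewrite /Gf => m2 n1 me ne ek H.
set br := (e - m - n) * e * (e - 1) + m * (m - 1) * n ^+ 2.
have brp : 0 <= br.
  have q : 0 <= m * (m - 1) * n ^+ 2 by apply: mulr_ge0; [apply: mulr_ge0; lra | apply: sqr_ge0].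
  case: ek => ek.
    rewrite /br; apply: addr_ge0 => //; apply: mulr_ge0; [apply: mulr_ge0|]; lra.
  set k := m + n - e.
  have k1 : 1 <= k by rewrite /k; lra.
  have hk1 : (m + n - k) * k <= m * n.
    have : 0 <= (m - k) * (n - k) by apply: mulr_ge0; rewrite /k; lra.
    move=> h; nra.
  have hk0 : 0 <= (m + n - k) * k by apply: mulr_ge0; rewrite /k; lra.
  have hk2 : m + n - k - 1 <= (m - 1) * n.
    have : 0 <= (m - 2) * (n - 1) by apply: mulr_ge0; lra.
    move=> h; nra.
  have hk3 : 0 <= m + n - k - 1 by rewrite /k; lra.
  have : (m + n - k) * k * (m + n - k - 1) <= m * n * ((m - 1) * n) by apply: ler_pM.
  have -> : (m + n - k) * k * (m + n - k - 1) = - ((e - m - n) * e * (e - 1)) by rewrite /k; ring.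
  rewrite /br; move=> h.
  have -> : m * (m - 1) * n ^+ 2 = m * n * ((m - 1) * n) by ring.
  lra.
have id : (m - 1) * (e - 1) * (e * (e - m) * (e - n) + e * m * n - m ^+ 2 * n ^+ 2) =
  m * e * ((e - 1) * (e - 1 - (m - 1)) * (e - 1 - n) + (e - 1) * (m - 1) * n - (m - 1) ^+ 2 * n ^+ 2)
  - (e - m) * br by rewrite /br; ring.
have p2 : m * e * ((e - 1) * (e - 1 - (m - 1)) * (e - 1 - n) + (e - 1) * (m - 1) * n - (m - 1) ^+ 2 * n ^+ 2) <= 0.
  apply: mulr_ge0_le0 => //; apply: mulr_ge0; lra.
have p3 : 0 <= (e - m) * br by apply: mulr_ge0 => //; lra.
have : (m - 1) * (e - 1) * (e * (e - m) * (e - n) + e * m * n - m ^+ 2 * n ^+ 2) <= 0 by rewrite id; lra.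
rewrite pmulr_rle0 //; apply: mulr_gt0; lra.
Qed.

Local Open Scope ring_scope.

Lemma eAB_le {T1 T2 : finType} (E : T1 -> T2 -> bool) (A : {set T1}) (B : {set T2}) :
  (eAB E A B <= #|A| * #|B|)%N.
Proof.
rewrite /eAB -sum_nat_const; apply: leq_sum => x _.
rewrite /dL -[X in (_ <= X)%N]muln1 -sum_nat_const; apply: leq_sum => y _.
by case: (E x y).
Qed.

Lemma eAB_del {T1 T2 : finType} (E : T1 -> T2 -> bool) (A : {set T1}) (B : {set T2}) x :
  x \in A -> eAB E A B = (dL E B x + eAB E (A :\ x) B)%N.
Proof. by move=> xA; rewrite /eAB (big_setD1 x xA). Qed.

Lemma card_del {T : finType} (A : {set T}) x : x \in A -> #|A| = (#|A :\ x| + 1)%N.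
Proof. by move=> xA; rewrite (cardsD1 x A) xA addnC. Qed.

Lemma Gf_sym (R : realType) (e m n : R) : Gf e m n = Gf e n m.
Proof. rewrite /Gf; ring. Qed.

Lemma del_step (R : realType) {T1 T2 : finType} (E : T1 -> T2 -> bool) (A : {set T1}) (B : {set T2}) x :
  x \in A -> (dL E B x <= 1)%N -> (#|A| < eAB E A B)%N -> (#|B| < eAB E A B)%N ->
  Gf ((eAB E (A :\ x) B)%:R : R) #|A :\ x|%:R #|B|%:R <= 0 ->
  Gf ((eAB E A B)%:R : R) #|A|%:R #|B|%:R <= 0.
Proof.
move=> xA dx me ne H.
have emn := eAB_le E A B.
have m2 : (2 <= #|A|)%N.
  case: (leqP 2 #|A|) => // h.
  have : (eAB E A B <= #|B|)%N.
    apply: leq_trans emn _; rewrite -[X in (_ <= X)%N]mul1n leq_mul2r.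
    by rewrite -ltnS h orbT.
  by rewrite leqNgt ne.
have n1 : (1 <= #|B|)%N.
  case: (leqP 1 #|B|) => // h.
  move: h; rewrite ltnS leqn0 => /eqP h0; move: emn; rewrite h0 muln0 leqn0 => /eqP e0.
  by move: me; rewrite e0.
rewrite (card_del A x xA) in me m2 * .
rewrite (eAB_del E A B x xA) in me ne *.
move: H.
set e' := eAB E (A :\ x) B.
set m' := #|A :\ x|.
set n := #|B|.
move: dx me ne; case: (dL E B x) => [_ me ne | [_ me ne | //]].
- rewrite add0n natrD => H; rewrite add0n in me ne; apply: AR_step0.
  + by rewrite -(@natrD R m' 1) (ler_nat R 2).
  + by rewrite ler_nat; apply: ltnW.
  + by [].
  + by rewrite addrK.
- rewrite natrD => H; apply: AR_step1.
  + by rewrite (ler_nat R 2).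
  + by rewrite (ler_nat R 1).
  + by rewrite addrC natr1 ler_nat; apply: ltnW; rewrite -add1n.
  + by rewrite addrC natr1 ler_nat; apply: ltnW; rewrite -add1n.
    rewrite (addrC 1 (e'%:R)) !natr1 -natrD !ler_nat.
    by case: (leqP (m' + 1 + n) e'.+1) => h; [left | right].
  + have -> : 1 + e'%:R - 1 = e'%:R :> R by ring.
    by rewrite natrD addrK.
Qed.

Lemma step_main (R : realType) {T1 T2 : finType} (E : T1 -> T2 -> bool) (A : {set T1}) (B : {set T2}) :
  NC4 E -> NC6 E ->
  (forall (T1' T2' : finType) (E' : T1' -> T2' -> bool) (A' : {set T1'}) (B' : {set T2'}),
     NC4 E' -> NC6 E' -> (#|A'| + #|B'| < #|A| + #|B|)%N ->
     Gf ((eAB E' A' B')%:R : R) #|A'|%:R #|B'|%:R <= 0) ->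
  Gf ((eAB E A B)%:R : R) #|A|%:R #|B|%:R <= 0.
Proof.
move=> H4 H6 IH.
have emn := eAB_le E A B.
case: (boolP ((eAB E A B <= #|A|)%N || (eAB E A B <= #|B|)%N)) => [triv | /norP[]].
  apply: AR_triv; rewrite ?ler0n //.
  - by rewrite -natrM ler_nat.
  - by case: (eAB E A B) => [|k]; [left | right; rewrite (ler_nat R 1)].
  - by case/orP: triv => h; [left | right]; rewrite ler_nat.
rewrite -!ltnNge => me ne.
have A0 : (0 < #|A|)%N.
  case: (posnP #|A|) => // h; move: emn; rewrite h mul0n leqn0 => /eqP h2.
  by move: me; rewrite h2.
have B0 : (0 < #|B|)%N.
  case: (posnP #|B|) => // h; move: emn; rewrite h muln0 leqn0 => /eqP h2.
  by move: ne; rewrite h2.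
case: (pickP [pred x in A | (dL E B x <= 1)%N]) => [x /andP[xA dx] | noA].
  apply: (@del_step R _ _ E A B x xA dx me ne); apply: IH => //.
  by rewrite (card_del A x xA) -addnA ltn_add2l addnC addn1.
case: (pickP [pred y in B | (dR E A y <= 1)%N]) => [y /andP[yB dy] | noB].
  rewrite Gf_sym -(eAB_tr E A B).
  apply: (@del_step R _ _ (trE E) B A y yB dy); rewrite ?(eAB_tr E A B) //.
  apply: IH; [exact: NC4_tr | exact: NC6_tr |].
  by rewrite (card_del B y yB) [X in (X < _)%N]addnC ltn_add2l addn1.
have dA : forall x, x \in A -> (2 <= dL E B x)%N.
  by move=> x xA; have := noA x; rewrite /= xA /= => /negbT; rewrite -ltnNge.
have dB : forall y, y \in B -> (2 <= dR E A y)%N.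
  by move=> y yB; have := noB y; rewrite /= yB /= => /negbT; rewrite -ltnNge.
have J := @jensen_edges R _ _ E A B dA dB A0 B0.
have PB := P3_bound E A B H4 H6.
have PBr : (P3 E A B)%:R + (eAB E A B)%:R <= #|A|%:R * #|B|%:R :> R.
  by rewrite -natrD -natrM ler_nat.
rewrite /Gf.
set e := (eAB E A B)%:R : R; set m := #|A|%:R : R; set n := #|B|%:R : R.
set p := (P3 E A B)%:R : R.
rewrite -/e -/m -/n -/p in J PBr.
have mn0 : 0 <= m * n by apply: mulr_ge0; apply: ler0n.
have : m * n * (p + e) <= m * n * (m * n) by apply: ler_wpM2l.
have -> : m ^+ 2 * n ^+ 2 = m * n * (m * n) by ring.
move=> h.
have -> : e * m * n = m * n * e by ring.
lra.
Qed.

Lemma main_ind (R : realType) (k : nat) : forall (T1 T2 : finType) (E : T1 -> T2 -> bool) (A : {set T1}) (B : {set T2}),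
  NC4 E -> NC6 E -> (#|A| + #|B| <= k)%N -> Gf ((eAB E A B)%:R : R) #|A|%:R #|B|%:R <= 0.
Proof.
elim: k => [|k IHk] T1 T2 E A B H4 H6 hk; apply: step_main => // T1' T2' E' A' B' H4' H6' hlt.
  by move: hlt; rewrite ltnNge (leq_trans hk) ?leq0n.
by apply: IHk => //; rewrite -ltnS (leq_trans hlt hk).
Qed.

Local Open Scope ring_scope.

Lemma poly_bound (R : realType) (s e : R) : 1 <= s -> 0 <= e ->
  e * ((e - s ^+ 3) ^+ 2 + s ^+ 6) <= s ^+ 12 ->
  e < s ^+ 4 + 2 / 3 * s ^+ 3 - 2 / 9 * s ^+ 2 - 20 / 81 * s.
Proof.
move=> s1 e0 H.
set B := s ^+ 4 + 2 / 3 * s ^+ 3 - 2 / 9 * s ^+ 2 - 20 / 81 * s.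
rewrite ltNge; apply/negP => eB.
set S := s ^+ 3.
have S1 : 1 <= S by rewrite /S exprn_ege1.
have keyE : (3 ^+ 12) * (B * ((B - S) ^+ 2 + s ^+ 6) - s ^+ 12) =
  8 * S * (10935 * s^+4 + 11421 * s^+3 - 2430 * s^+2 - 2700 * s - 1000).
  by rewrite /B /S; field.
have s2 : s <= s ^+ 2 by rewrite expr2; nra.
have s3 : s ^+ 2 <= s ^+ 3.
  have := exprn_ege1 2 s1; rewrite exprS; nra.
have s4 : s ^+ 3 <= s ^+ 4.
  have := exprn_ege1 3 s1; rewrite (exprS s 3); nra.

have Ppos : 0 < 10935 * s^+4 + 11421 * s^+3 - 2430 * s^+2 - 2700 * s - 1000 by lra.
have gB : s ^+ 12 < B * ((B - S) ^+ 2 + s ^+ 6).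
  rewrite -subr_gt0 -(pmulr_rgt0 _ (exprn_gt0 12 (ltr0Sn R 2))) keyE.
  apply: mulr_gt0 => //; apply: mulr_gt0 => //; lra.
clear keyE Ppos.
have diff : e * ((e - S) ^+ 2 + s ^+ 6) - B * ((B - S) ^+ 2 + s ^+ 6) =
  (e - B) * (((e - S + (B - S) + S) ^+ 2 + (e - S) ^+ 2 + (B - S) ^+ 2 + S ^+ 2) / 2).
  have -> : s ^+ 6 = S ^+ 2 by rewrite /S -exprM.
  by field.
have : 0 <= (e - B) * (((e - S + (B - S) + S) ^+ 2 + (e - S) ^+ 2 + (B - S) ^+ 2 + S ^+ 2) / 2).
  apply: mulr_ge0; first lra.
  apply: divr_ge0 => //; rewrite !addr_ge0 // ?sqr_ge0 //.
rewrite -diff; rewrite -/S in H; lra.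
Qed.


Lemma girth_NC4 (v : nat) (E : 'I_v -> 'I_v -> bool) : girth_ge (bip_adj E) 8 -> NC4 E.
Proof.
move=> G x x' y y' nx ny e1 e2 e3 e4.
have nx' : x' != x by rewrite eq_sym.
have ny' : y' != y by rewrite eq_sym.
apply: (G 4) => //.
exists (fun i => nth (inl x) [:: inl x; inr y; inl x'; inr y'] i); split.
  move=> [|[|[|[|i]]]] [|[|[|[|j]]]] //= hi hj; try discriminate;
    case=> /eqP; by rewrite ?(negbTE nx) ?(negbTE ny) ?(negbTE nx') ?(negbTE ny').
by move=> [|[|[|[|i]]]] //=.
Qed.

Lemma girth_NC6 (v : nat) (E : 'I_v -> 'I_v -> bool) : girth_ge (bip_adj E) 8 -> NC6 E.
Proof.
move=> G x1 x2 x3 y1 y2 y3 n12 n23 n13 m12 m23 m13 e1 e2 e3 e4 e5 e6.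
have n21 : x2 != x1 by rewrite eq_sym.
have n32 : x3 != x2 by rewrite eq_sym.
have n31 : x3 != x1 by rewrite eq_sym.
have m21 : y2 != y1 by rewrite eq_sym.
have m32 : y3 != y2 by rewrite eq_sym.
have m31 : y3 != y1 by rewrite eq_sym.
apply: (G 6) => //.
exists (fun i => nth (inl x1) [:: inl x1; inr y1; inl x2; inr y2; inl x3; inr y3] i); split.
  move=> [|[|[|[|[|[|i]]]]]] [|[|[|[|[|[|j]]]]]] //= hi hj; try discriminate;
    case=> /eqP; by rewrite ?(negbTE n12) ?(negbTE n23) ?(negbTE n13) ?(negbTE n21) ?(negbTE n32) ?(negbTE n31)
      ?(negbTE m12) ?(negbTE m23) ?(negbTE m13) ?(negbTE m21) ?(negbTE m32) ?(negbTE m31).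
by move=> [|[|[|[|[|[|i]]]]]] //=.
Qed.

Local Open Scope ring_scope.

Lemma bip_edges_eAB (v : nat) (E : 'I_v -> 'I_v -> bool) : bip_edges E = eAB E (finset.setT : {set 'I_v}) (finset.setT : {set 'I_v}).
Proof.
rewrite /bip_edges /eAB /dL pair_big /= -sum1_card [RHS]big_mkcond /=.
rewrite [LHS]big_mkcond /=; apply: eq_bigr => p _; rewrite !finset.in_setT inE /=.
by case: (E p.1 p.2).
Qed.

Local Open Scope ring_scope.

Theorem corollary4p9 (R : realType) (v : nat) (E : 'I_v -> 'I_v -> bool) :
  (0 < v)%N ->
  girth_ge (bip_adj E) 8 ->
  (bip_edges E)%:R < (v%:R : R) `^ (4 / 3) + 2 / 3 * v%:R
                     - 2 / 9 * (v%:R : R) `^ (2 / 3) - 20 / 81 * (v%:R : R) `^ (1 / 3).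
Proof.
move=> v0 G.
have H4 := @girth_NC4 v E G.
have H6 := @girth_NC6 v E G.
have M := @main_ind R _ _ _ E finset.setT finset.setT H4 H6 (leqnn _).
rewrite cardsT card_ord -bip_edges_eAB in M.
set e := (bip_edges E)%:R : R in M *.
set V := v%:R : R in M *.
have V1 : 1 <= V by rewrite /V (ler_nat R 1).
set s := V `^ (1 / 3).
have s0 : 0 <= s by apply: powR_ge0.
have sV : s ^+ 3 = V.
  rewrite /s -powR_mulrn // -powRrM (_ : 1/3 * 3%:R = 1) ?powRr1 ?ler0n //; lra.
have s1 : 1 <= s.
  case: (lerP 1 s) => // h; exfalso.
  have : s ^+ 3 < 1 by rewrite expr_lt1.
  rewrite sV; lra.
have P4 : V `^ (4 / 3) = s ^+ 4.
  by rewrite /s -powR_mulrn // -powRrM; congr (_ `^ _); lra.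
have P2 : V `^ (2 / 3) = s ^+ 2.
  by rewrite /s -powR_mulrn // -powRrM; congr (_ `^ _); lra.
rewrite P4 P2 -/s -sV.
apply: poly_bound => //.
move: M; rewrite /Gf -sV.
have -> : s ^+ 6 = (s ^+ 3) ^+ 2 by rewrite -exprM.
have -> : s ^+ 12 = (s ^+ 3) ^+ 2 * (s ^+ 3) ^+ 2 by rewrite -!exprM -exprD.
move=> M.
have -> : e * ((e - s ^+ 3) ^+ 2 + (s ^+ 3) ^+ 2) = e * (e - s ^+ 3) * (e - s ^+ 3) + e * s ^+ 3 * s ^+ 3 by ring.
lra.
Qed.
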